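(* Let $b_+,b_->0$, $\delta_\pm\in\mathbb R$ with $b_\pm+\delta_\pm>0$, $c>0$, and $k\in[-\pi,\pi)$, and assume that either $k\neq 0$ or both $\delta_+\neq0$ and $\delta_-\ne0$. Let $v_1(b_+,\delta_+,k)$ be an eigenvector of $P(b_+,\delta_+,k)$ for its eigenvalue $\lambda_1$ of modulus less than $1$, and $v_2(b_-,\delta_-,k)$ an eigenvector of $P(b_-,\delta_-,k)$ for its eigenvalue $\lambda_2$ of modulus greater than $1$. Then $0$ is a two-fold eigenvalue of the type-I interface Hamiltonian $\hat H_{\mathrm I}(k)$ (its eigenspace in $\ell^2(\mathbb Z;\mathbb C^6)$ is two-dimensional) if and only if there is a nonzero constant $g\in\mathbb C$ with $$\begin{pmatrix}1&0\\0&\frac{(b_++\delta_+)(b_-+\delta_-)}{c^2}\end{pmatrix}v_1(b_+,\delta_+,k)=g\,v_2(b_-,\delta_-,k).$$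
   Context: Matrices: for $b>0$, $b+\varepsilon>0$, $k\in\mathbb R$ let $A_1=\begin{pmatrix}-b&0\\-b&-(b+\varepsilon)e^{-ik}\end{pmatrix}$, $A_2=\begin{pmatrix}-b&-(b+\varepsilon)e^{ik}\\0&-b\end{pmatrix}$, $A_3=\begin{pmatrix}-(b+\varepsilon)e^{-ik}&0\\-b&-b\end{pmatrix}$, $A_4=\begin{pmatrix}-b&-b\\0&-(b+\varepsilon)\end{pmatrix}$, $A_5=\begin{pmatrix}-b&0\\-(b+\varepsilon)e^{ik}&-b\end{pmatrix}$, $A_6=\begin{pmatrix}-(b+\varepsilon)&-b\\0&-b\end{pmatrix}$, and $P(b,\varepsilon,k)=-A_6^{-1}A_5A_4^{-1}A_3A_2^{-1}A_1$; when $k\ne0$ or $\varepsilon\neq0$ it has two distinct eigenvalues $\lambda_1,\lambda_2$ with $0<|\lambda_1|<1<|\lambda_2|$. Operator: for $n\in\mathbb Z$ let $b_n=b_+$ ($n\ge0$), $b_n=b_-$ ($n\le-1$); $c_n=b_++\delta_+$ ($n\ge0$), $c_{-1}=c$, $c_n=b_-+\delta_-$ ($n\le-2$); $d_n=b_++\delta_+$ ($n\ge0$), $d_n=b_-+\delta_-$ ($n\le-1$). $\hat H_{\mathrm I}(k)$ acts on $u=\{(u_{j,n})_{j=1}^6\}_{n\in\mathbb Z}\in\ell^2(\mathbb Z;\mathbb C^6)$ by $(\hat H_{\mathrm I}(k)u)_{1,n}=-b_nu_{4,n}-b_nu_{5,n}-c_{n-1}e^{-ik}u_{6,n-1}$,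 $(\hat H_{\mathrm I}(k)u)_{2,n}=-b_nu_{4,n}-d_ne^{ik}u_{5,n}-b_nu_{6,n}$, $(\hat H_{\mathrm I}(k)u)_{3,n}=-c_nu_{4,n+1}-b_nu_{5,n}-b_nu_{6,n}$, $(\hat H_{\mathrm I}(k)u)_{4,n}=-b_nu_{1,n}-b_nu_{2,n}-c_{n-1}u_{3,n-1}$, $(\hat H_{\mathrm I}(k)u)_{5,n}=-b_nu_{1,n}-d_ne^{-ik}u_{2,n}-b_nu_{3,n}$, $(\hat H_{\mathrm I}(k)u)_{6,n}=-c_ne^{ik}u_{1,n+1}-b_nu_{2,n}-b_nu_{3,n}$. *)

(* Defs.v *)
From HB Require Import structures.
From mathcomp Require Import all_boot all_order all_algebra.
From mathcomp Require Import complex.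
From mathcomp Require Import reals trigo.
Set Implicit Arguments. Unset Strict Implicit. Unset Printing Implicit Defensive.
Import Order.TTheory GRing.Theory Num.Theory.
Local Open Scope ring_scope.

Section Defs.
Variable R : realType.
Local Notation C := R[i].

Definition expi (k : R) : C := Complex (cos k) (sin k).

Definition mx2 (a b c d : C) : 'M[C]_2 :=
  \matrix_(i < 2, j < 2)
    if i == ord0 then (if j == ord0 then a else b) else (if j == ord0 then c else d).

Definition rC (x : R) : C := Complex x 0.

Definition Pmat (b eps k : R) : 'M[C]_2 :=
  let B := rC b in let E := rC (b + eps) in
  let A1 := mx2 (- B) 0 (- B) (- E * expi (- k)) in
  let A2 := mx2 (- B) (- E * expi k) 0 (- B) in
  let A3 := mx2 (- E * expi (- k)) 0 (- B) (- B) in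
  let A4 := mx2 (- B) (- B) 0 (- E) in
  let A5 := mx2 (- B) 0 (- E * expi k) (- B) in
  let A6 := mx2 (- E) (- B) 0 (- B) in
  - (invmx A6 *m A5 *m invmx A4 *m A3 *m invmx A2 *m A1).

Definition bseq (bp bm : R) (n : int) : R := if (0 <= n)%R then bp else bm.
Definition cseq (bp bm dp dm c : R) (n : int) : R :=
  if (0 <= n)%R then bp + dp else if n == (-1)%R then c else bm + dm.
Definition dseq (bp bm dp dm : R) (n : int) : R :=
  if (0 <= n)%R then bp + dp else bm + dm.

(* sequences u = {(u_{j,n})_{j=1..6}}_{n in Z}; component j (1-based) is u n (inord (j-1)) *)
Definition seq6 := int -> 'I_6 -> C.
Definition cmp (u : seq6) (j : nat) (n : int) : C := u n (@inord 5 j.-1).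

Definition HI (bp bm dp dm c k : R) (u : seq6) : seq6 :=
  fun n j =>
  let b m := rC (bseq bp bm m) in
  let cc m := rC (cseq bp bm dp dm c m) in
  let d m := rC (dseq bp bm dp dm m) in
  match nat_of_ord j with
  | 0 => - b n * cmp u 4 n - b n * cmp u 5 n - cc (n - 1) * expi (- k) * cmp u 6 (n - 1)
  | 1 => - b n * cmp u 4 n - d n * expi k * cmp u 5 n - b n * cmp u 6 n
  | 2 => - cc n * cmp u 4 (n + 1) - b n * cmp u 5 n - b n * cmp u 6 n
  | 3 => - b n * cmp u 1 n - b n * cmp u 2 n - cc (n - 1) * cmp u 3 (n - 1)
  | 4 => - b n * cmp u 1 n - d n * expi (- k) * cmp u 2 n - b n * cmp u 3 n
  | _ => - cc n * expi k * cmp u 1 (n + 1) - b n * cmp u 2 n - b n * cmp u 3 n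
  end.

Definition l2 (u : seq6) : Prop :=
  exists M : R, forall N : nat,
    \sum_(i < N) \sum_(j < 6) (`|u (i%:Z) j| ^+ 2 + `|u (- (i%:Z) - 1) j| ^+ 2) <= rC M.

Definition kernel_l2 (H : seq6 -> seq6) (u : seq6) : Prop :=
  l2 u /\ forall n j, H u n j = 0.

Definition dim2 (K : seq6 -> Prop) : Prop :=
  exists u1 u2 : seq6, K u1 /\ K u2 /\
    (forall a1 a2 : C, (forall n j, a1 * u1 n j + a2 * u2 n j = 0) -> a1 = 0 /\ a2 = 0) /\
    (forall u, K u -> exists a1 a2 : C, forall n j, u n j = a1 * u1 n j + a2 * u2 n j).

End Defs.

(* Main.v *)
Require Import Defs.
From HB Require Import structures.
From mathcomp Require Import all_boot all_order all_algebra.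
From mathcomp Require Import complex.
From mathcomp Require Import reals trigo.
From mathcomp Require Import ring lra zify.
Import Order.TTheory GRing.Theory Num.Theory.
Local Open Scope ring_scope.
Local Open Scope complex_scope.
Import ComplexField.Normc.
Set Implicit Arguments. Unset Strict Implicit. Unset Printing Implicit Defensive.

Section M1.
Variable R : realType.
Local Notation C := R[i].

Lemma mx2E (a b c d : C) i j : mx2 a b c d i j =
  if i == ord0 then (if j == ord0 then a else b) else (if j == ord0 then c else d).
Proof. by rewrite mxE. Qed.

Lemma mx2_mul (a b c d a' b' c' d' : C) :
  mx2 a b c d *m mx2 a' b' c' d' =
  mx2 (a * a' + b * c') (a * b' + b * d') (c * a' + d * c') (c * b' + d * d').
Proof.
apply/matrixP => i j; rewrite !mxE big_ord_recl big_ord1 !mxE.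
by case: i => [[|[|i]] hi]; case: j => [[|[|j]] hj].
Qed.

Lemma mx2_opp (a b c d : C) : - mx2 a b c d = mx2 (-a) (-b) (-c) (-d).
Proof.
apply/matrixP => i j; rewrite !mxE.
by case: i => [[|[|i]] hi]; case: j => [[|[|j]] hj].
Qed.

Lemma mx2_1 : (1%:M : 'M[C]_2) = mx2 1 0 0 1.
Proof.
apply/matrixP => i j; rewrite !mxE.
by case: i => [[|[|i]] hi]; case: j => [[|[|j]] hj].
Qed.

Lemma mx2_eq (a b c d a' b' c' d' : C) :
  a = a' -> b = b' -> c = c' -> d = d' -> mx2 a b c d = mx2 a' b' c' d'.
Proof. by move=> -> -> -> ->. Qed.

Lemma invmx_mx2 (a b c d : C) : a * d - b * c != 0 ->
  invmx (mx2 a b c d) = mx2 (d / (a * d - b * c)) (- b / (a * d - b * c))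
                            (- c / (a * d - b * c)) (a / (a * d - b * c)).
Proof.
move=> hD.
have h1 : mx2 a b c d *m mx2 (d / (a * d - b * c)) (- b / (a * d - b * c))
                            (- c / (a * d - b * c)) (a / (a * d - b * c)) = 1%:M.
  by rewrite mx2_mul mx2_1; apply: mx2_eq; field.
have [hu _] := mulmx1_unit h1.
by rewrite -[RHS](mulKmx hu) h1 mulmx1.
Qed.


Definition QBm (rho z : C) : 'M[C]_2 :=
  mx2 ((2 - rho * z) / rho) (z^-1 - rho) (rho * z - 1) (rho ^+ 2).

Lemma Pmat_gen (B E z : C) : B != 0 -> E != 0 -> z != 0 ->
  let A1 := mx2 (- B) 0 (- B) (- E * z^-1) in
  let A2 := mx2 (- B) (- E * z) 0 (- B) in
  let A3 := mx2 (- E * z^-1) 0 (- B) (- B) in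
  let A4 := mx2 (- B) (- B) 0 (- E) in
  let A5 := mx2 (- B) 0 (- E * z) (- B) in
  let A6 := mx2 (- E) (- B) 0 (- B) in
  - (invmx A6 *m A5 *m invmx A4 *m A3 *m invmx A2 *m A1) = QBm (E / B) z *m QBm (E / B) z.
Proof.
move=> hB hE hz /=.
rewrite !invmx_mx2; try by rewrite mulr0 subr0 mulrNN mulf_neq0.
rewrite /QBm !mx2_mul mx2_opp; apply: mx2_eq; field.
all: by rewrite ?hB ?hE ?hz.
Qed.

End M1.


Section P1.
Variable R : realType.
Local Notation C := R[i].

Definition cross (a b : C * C) : C := a.1 * b.2 - a.2 * b.1.
Definition scl (s : C) (a : C * C) : C * C := (s * a.1, s * a.2).

Definition Qg (al ze be a d e : C) (v : C * C) : C * C :=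
  let y := - v.1 - a * al * v.2 in
  let t := - v.1 - d * ze * y in
  (- (y + t) / (e * be), t).

Lemma rC_neq0 (x : R) : x != 0 -> rC x != 0.
Proof. by apply: contra => /eqP [] ->. Qed.

Lemma int_a (m : nat) : Negz m.+1 + 1 = Negz m. Proof. lia. Qed.
Lemma int_b (m : nat) : Posz m.+1 - 1 = Posz m. Proof. lia. Qed.
Lemma int_c : Posz 0 - 1 = Negz 0. Proof. lia. Qed.
Lemma int_d (m : nat) : Negz m - 1 = Negz m.+1. Proof. lia. Qed.
Lemma int_e (i : nat) : - (i%:Z) - 1 = Negz i. Proof. lia. Qed.
Lemma int_f (m : nat) : Posz m + 1 = Posz m.+1. Proof. lia. Qed.
Lemma int_g : Negz 0 + 1 = Posz 0. Proof. lia. Qed.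
Lemma int_h (n : int) : n + 1 - 1 = n. Proof. lia. Qed.
Lemma int_i (n : int) : n - 1 + 1 = n. Proof. lia. Qed.

Lemma cross_scl_l s a b : cross (scl s a) b = s * cross a b.
Proof. rewrite /cross /=; ring. Qed.
Lemma cross_scl_r s a b : cross a (scl s b) = s * cross a b.
Proof. rewrite /cross /=; ring. Qed.
Lemma scl1 (v : C * C) : scl 1 v = v.
Proof. by case: v => a b; rewrite /scl /= !mul1r. Qed.
Lemma scl_scl (a b : C) v : scl a (scl b v) = scl (a * b) v.
Proof. by rewrite /scl /= !mulrA. Qed.

Lemma Qg_scl (al ze be a d e s : C) v : Qg al ze be a d e (scl s v) = scl s (Qg al ze be a d e v).
Proof. rewrite /Qg /scl /=; congr (_, _); ring. Qed.

Lemma Qg0 (al ze be a d e : C) : Qg al ze be a d e (0, 0) = (0, 0).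
Proof. rewrite /Qg /=; congr (_, _); ring. Qed.

Lemma Qg_det (al ze be a d e : C) u v : e != 0 -> be != 0 ->
  cross (Qg al ze be a d e u) (Qg al ze be a d e v) = a * al / (e * be) * cross u v.
Proof. move=> he hb; rewrite /cross /Qg /=; field; by rewrite he hb. Qed.

Lemma Qg_e (al ze be r e : C) v : r != 0 -> e != 0 -> be != 0 ->
  Qg al ze be r r e v = (r / e * (Qg al ze be r r r v).1, (Qg al ze be r r r v).2).
Proof. move=> hr he hb; rewrite /Qg /=; congr (_, _); field; by rewrite hr he hb. Qed.

Lemma Qg_a (al ze be a r : C) v : r != 0 ->
  Qg al ze be a r r v = Qg al ze be r r r (v.1, a / r * v.2).
Proof. move=> hr; rewrite /Qg /=; congr (_, _); [congr (_ / _)|]; field; exact: hr. Qed.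

Lemma Qg_inj0 (al ze be a d e : C) v : a != 0 -> al != 0 -> e != 0 -> be != 0 ->
  Qg al ze be a d e v = (0, 0) -> v = (0, 0).
Proof.
case: v => x p ha hal he hbe /= [h1 h2].
have heb : e * be != 0 by rewrite mulf_neq0.
have h3 := congr1 (fun q => q * (e * be)) h1; rewrite /= mul0r divfK // in h3.
move/eqP: h3; rewrite oppr_eq0 h2 addr0 => /eqP hY.
move: h2; rewrite hY mulr0 subr0 => /eqP; rewrite oppr_eq0 => /eqP hx.
move: hY; rewrite hx oppr0 sub0r => /eqP; rewrite oppr_eq0 !mulf_eq0 (negbTE ha) (negbTE hal) /= => /eqP ->.
by [].
Qed.

Lemma cross0_scl (a v : C * C) : a != (0, 0) -> cross a v = 0 -> exists g, v = scl g a.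
Proof.
case: a => a1 a2; case: v => v1 v2; rewrite /cross /scl /= => ha h.
have [h1|h1] := eqVneq a1 0.
  have h2 : a2 != 0 by apply: contra ha => /eqP ->; rewrite h1.
  exists (v2 / a2); congr (_, _); last by rewrite divfK.
  move: h; rewrite h1 mul0r sub0r => /eqP; rewrite oppr_eq0 mulf_eq0 (negbTE h2) /= => /eqP ->.
  by rewrite mulr0.
exists (v1 / a1); congr (_, _); first by rewrite divfK.
apply/eqP; rewrite -subr_eq0; apply/eqP.
have -> : v2 - v1 / a1 * a2 = (a1 * v2 - a2 * v1) / a1 by field.
by rewrite h mul0r.
Qed.

Lemma nc_ge0 (x : C) : 0 <= normc x.
Proof. by case: x => a b; rewrite /normc sqrtr_ge0. Qed.

Lemma normcX (x : C) n : normc (x ^+ n) = normc x ^+ n.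
Proof. by apply: complexI; rewrite rmorphXn /= -[LHS]/(`|x ^+ n|) normrX. Qed.

Lemma normcB (x y : C) : normc (x - y) <= normc x + normc y.
Proof. by rewrite -(normcN y); exact: le_normcD. Qed.

End P1.

Section P2.
Variable R : realType.

Lemma growth0 (f : nat -> R) (M : R) : (forall m, 0 <= f m) ->
  (forall m, f m <= f m.+1) -> (forall N, \sum_(i < N) f i ^+ 2 <= M) -> f 0%N = 0.
Proof.
move=> f0 fi fM.
have hm : forall m, f 0%N <= f m by elim=> [|m IH] //; exact: le_trans (fi m).
have hs : forall N, N%:R * f 0%N ^+ 2 <= \sum_(i < N) f i ^+ 2.
  elim=> [|N IH]; first by rewrite big_ord0 mul0r.
  rewrite big_ord_recr /= -natr1 mulrDl mul1r lerD //.
  have := hm N; have := f0 0%N; nra.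
apply/eqP; rewrite eq_le f0 andbT; apply/negP => /negP; rewrite -ltNge => hpos.
have hp2 : 0 < f 0%N ^+ 2 by rewrite exprn_gt0.
have hM0 : 0 <= M / f 0%N ^+ 2.
  by apply: divr_ge0; [have := fM 0%N; rewrite big_ord0 | exact: ltW].
have := archi_boundP hM0; set N := Num.Def.archi_bound _ => hN.
have := le_trans (hs N) (fM N).
rewrite ltr_pdivrMr // in hN; lra.
Qed.

Lemma geom_sum (r : R) N : (\sum_(i < N) r ^+ i) * (1 - r) = 1 - r ^+ N.
Proof.
elim: N => [|N IH]; first by rewrite big_ord0 mul0r expr0 subrr.
rewrite big_ord_recr /= mulrDl IH exprS; ring.
Qed.

Lemma geom_bound (r : R) N : 0 <= r < 1 -> \sum_(i < N) r ^+ i <= (1 - r)^-1.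
Proof.
case/andP=> r0 r1.
have h1 : 0 < 1 - r by lra.
rewrite -(ler_pM2r h1) geom_sum mulVf ?gt_eqF //.
rewrite lerBlDr lerDl; exact: exprn_ge0.
Qed.

Lemma geo_l2 (f : nat -> R) (r : R) : 0 <= r < 1 -> (forall m, 0 <= f m) ->
  (forall m, f m.+2 = r ^+ m.+1 * f 1%N) ->
  forall N, \sum_(i < N) f i <= f 0%N + f 1%N * (1 - r)^-1.
Proof.
move=> hr f0 hf N.
have hmon : forall N, \sum_(i < N) f i <= \sum_(i < N.+1) f i.
  by move=> K; rewrite big_ord_recr /= lerDl.
apply: le_trans (hmon N) _.
rewrite big_ord_recl /= lerD2l.
have -> : \sum_(i < N) f (bump 0 i) = \sum_(i < N) (r ^+ i * f 1%N).
  apply: eq_bigr => [[[|i] hi]] _ /=; first by rewrite expr0 mul1r.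
  by rewrite /bump /= add1n hf.
rewrite -mulr_suml mulrC ler_wpM2l //; exact: geom_bound.
Qed.

End P2.

Section Chain.
Variable R : realType.
Local Notation C := R[i].
Variables (bp bm dp dm c : R).
Hypotheses (hbp : 0 < bp) (hbm : 0 < bm) (hdp : 0 < bp + dp) (hdm : 0 < bm + dm) (hc : 0 < c).
Variables (al ze be : C).
Hypotheses (hal : al != 0) (hbe : be != 0) (hdel : normc (al / be) = 1).

Definition Bc n : C := rC (Defs.bseq bp bm n).
Definition Cc n : C := rC (cseq bp bm dp dm c n).
Definition Dc n : C := rC (dseq bp bm dp dm n).

Lemma Bc_neq0 n : Bc n != 0.
Proof. by rewrite /Bc /Defs.bseq; case: ifP => _; apply: rC_neq0; rewrite gt_eqF. Qed.
Lemma Cc_neq0 n : Cc n != 0.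
Proof. by rewrite /Cc /cseq; case: ifP => _; [|case: ifP => _]; apply: rC_neq0; rewrite gt_eqF. Qed.
Lemma Dc_neq0 n : Dc n != 0.
Proof. by rewrite /Dc /dseq; case: ifP => _; apply: rC_neq0; rewrite gt_eqF. Qed.

Definition Qn n := Qg al ze be (Cc (n - 1) / Bc n) (Dc n / Bc n) (Cc n / Bc n).
Definition rp : C := rC (bp + dp) / rC bp.
Definition rm : C := rC (bm + dm) / rC bm.
Definition Qp := Qg al ze be rp rp rp.
Definition Qm := Qg al ze be rm rm rm.

Lemma Qn_pos (m : nat) : Qn (Posz m.+1) = Qp.
Proof. by rewrite /Qn int_b /Qp /rp /Bc /Cc /Dc /Defs.bseq /cseq /dseq. Qed.
Lemma Qn_neg (m : nat) : Qn (Negz m.+1) = Qm.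
Proof. by rewrite /Qn int_d /Qm /rm /Bc /Cc /Dc /Defs.bseq /cseq /dseq. Qed.
Lemma Qn_0 : Qn 0 = Qg al ze be (rC c / rC bp) rp rp.
Proof. by rewrite /Qn int_c /rp /Bc /Cc /Dc /Defs.bseq /cseq /dseq. Qed.
Lemma Qn_m1 : Qn (Negz 0) = Qg al ze be rm rm (rC c / rC bm).
Proof. by rewrite /Qn int_d /rm /Bc /Cc /Dc /Defs.bseq /cseq /dseq. Qed.

Definition chain (x y t : int -> C) := forall n,
  [/\ Bc n * x n + Bc n * y n + Cc (n - 1) * al * t (n - 1) = 0,
      Bc n * x n + Dc n * ze * y n + Bc n * t n = 0 &
      Cc n * be * x (n + 1) + Bc n * y n + Bc n * t n = 0].

Definition W (x t : int -> C) n : C * C := (x n, t (n - 1)).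

Lemma chain_y x y t : chain x y t -> forall n,
  y n = - x n - Cc (n - 1) / Bc n * al * t (n - 1).
Proof.
move=> hch n; case: (hch n) => e1 _ _.
have hB := Bc_neq0 n.
apply/eqP; rewrite -subr_eq0; apply/eqP.
have -> : y n - (- x n - Cc (n - 1) / Bc n * al * t (n - 1)) =
  (Bc n * x n + Bc n * y n + Cc (n - 1) * al * t (n - 1)) / Bc n by field.
by rewrite e1 mul0r.
Qed.

Lemma chain_step x y t : chain x y t -> forall n, W x t (n + 1) = Qn n (W x t n).
Proof.
move=> hch n; have hy := chain_y hch n; case: (hch n) => _ e2 e3.
have hB := Bc_neq0 n; have hC := Cc_neq0 n.
rewrite /W /Qn /Qg /= int_h -hy; congr (_, _).
  apply/eqP; rewrite -subr_eq0; apply/eqP.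
  have -> : x (n + 1) - - (y n + (- x n - Dc n / Bc n * ze * y n)) / (Cc n / Bc n * be) =
    ((Cc n * be * x (n + 1) + Bc n * y n + Bc n * t n) - (Bc n * x n + Dc n * ze * y n + Bc n * t n)) / (Cc n * be).
    by field; rewrite hB hC hbe.
  by rewrite e2 e3 subrr mul0r.
apply/eqP; rewrite -subr_eq0; apply/eqP.
have -> : t n - (- x n - Dc n / Bc n * ze * y n) =
  (Bc n * x n + Dc n * ze * y n + Bc n * t n) / Bc n by field.
by rewrite e2 mul0r.
Qed.


Lemma rp_neq0 : rp != 0.
Proof. by rewrite /rp mulf_neq0 ?invr_eq0 // rC_neq0 // gt_eqF. Qed.
Lemma rm_neq0 : rm != 0.
Proof. by rewrite /rm mulf_neq0 ?invr_eq0 // rC_neq0 // gt_eqF. Qed.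

Section OfW.
Variable Wf : int -> C * C.
Hypothesis hW : forall n, Wf (n + 1) = Qn n (Wf n).
Definition xW n := (Wf n).1.
Definition tW n := (Wf (n + 1)).2.
Definition yW n := - xW n - Cc (n - 1) / Bc n * al * (Wf n).2.

Lemma W_of_W n : W xW tW n = Wf n.
Proof. by rewrite /W /xW /tW int_i; case: (Wf n). Qed.

Lemma chain_of_W : chain xW yW tW.
Proof.
move=> n; have hB := Bc_neq0 n; have hC := Cc_neq0 n.
have ht : tW (n - 1) = (Wf n).2 by rewrite /tW int_i.
have hQ := hW n; rewrite /Qn /Qg in hQ.
split.
- rewrite ht /yW; field; exact: hB.
- rewrite /tW hQ /= /yW /xW; field; exact: hB.
- rewrite /tW /xW hQ /= /yW /xW; field; by rewrite hB hC hbe.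
Qed.
End OfW.

Lemma chain_zero x y t : chain x y t -> W x t (Negz 0) = (0, 0) ->
  forall n, [/\ x n = 0, y n = 0 & t n = 0].
Proof.
move=> hch h0.
have hst := chain_step hch.
have hWz : forall n, W x t n = (0, 0).
  have hpos : forall m : nat, W x t (Posz m) = (0, 0).
    elim=> [|m IH]; first by rewrite -int_g hst h0 /Qn Qg0.
    by rewrite -int_f hst IH /Qn Qg0.
  have hneg : forall m : nat, W x t (Negz m) = (0, 0).
    elim=> [|m IH] //.
    have := hst (Negz m.+1); rewrite int_a Qn_neg IH => /esym.
    by apply: Qg_inj0 => //; exact: rm_neq0.
  by case.
move=> n.
have hx : x n = 0 by have := hWz n; case.
have ht : t n = 0 by have := hWz (n + 1); rewrite /W int_h; case.
split => //.
rewrite (chain_y hch n).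
have -> : t (n - 1) = 0 by have := hWz n; case.
by rewrite hx mulr0 subr0 oppr0.
Qed.

Lemma chain_lin x y t x' y' t' (s : C) : chain x y t -> chain x' y' t' ->
  chain (fun n => x n - s * x' n) (fun n => y n - s * y' n) (fun n => t n - s * t' n).
Proof.
move=> h h' n; case: (h n) => e1 e2 e3; case: (h' n) => f1 f2 f3; split.
- have -> : Bc n * (x n - s * x' n) + Bc n * (y n - s * y' n) + Cc (n - 1) * al * (t (n - 1) - s * t' (n - 1))
    = (Bc n * x n + Bc n * y n + Cc (n - 1) * al * t (n - 1))
      - s * (Bc n * x' n + Bc n * y' n + Cc (n - 1) * al * t' (n - 1)) by ring.
  by rewrite e1 f1 mulr0 subr0.
- have -> : Bc n * (x n - s * x' n) + Dc n * ze * (y n - s * y' n) + Bc n * (t n - s * t' n)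
    = (Bc n * x n + Dc n * ze * y n + Bc n * t n) - s * (Bc n * x' n + Dc n * ze * y' n + Bc n * t' n) by ring.
  by rewrite e2 f2 mulr0 subr0.
- have -> : Cc n * be * (x (n + 1) - s * x' (n + 1)) + Bc n * (y n - s * y' n) + Bc n * (t n - s * t' n)
    = (Cc n * be * x (n + 1) + Bc n * y n + Bc n * t n) - s * (Cc n * be * x' (n + 1) + Bc n * y' n + Bc n * t' n) by ring.
  by rewrite e3 f3 mulr0 subr0.
Qed.

Lemma chain_unique x y t x' y' t' (s : C) : chain x y t -> chain x' y' t' ->
  W x t (Negz 0) = scl s (W x' t' (Negz 0)) ->
  forall n, [/\ x n = s * x' n, y n = s * y' n & t n = s * t' n].
Proof.
move=> h h' hs n.
have := chain_zero (chain_lin s h h') _ n.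
case=> [|/eqP a /eqP b /eqP c']; last by split; apply/eqP; rewrite -subr_eq0.
by move: hs; rewrite /W /scl /= => -[-> ->]; rewrite !subrr.
Qed.

Lemma chain_interface x y t : chain x y t ->
  W x t 1 = Qn 0 (Qn (Negz 0) (W x t (Negz 0))).
Proof. by move=> h; rewrite -(chain_step h) int_g -(chain_step h). Qed.


Definition ns (x y t : int -> C) n : R := normc (x n) ^+ 2 + normc (y n) ^+ 2 + normc (t n) ^+ 2.
Definition cl2 (x y t : int -> C) := exists M : R, forall N,
  \sum_(i < N) (ns x y t (Posz i) + ns x y t (Negz i)) <= M.

Lemma ns_ge0 x y t n : 0 <= ns x y t n.
Proof. by rewrite /ns !addr_ge0 // exprn_ge0 // nc_ge0. Qed.

Lemma aux_sq (f a b p q : R) : 0 <= f -> f <= a * q + b * p -> 0 <= a -> 0 <= b ->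
  0 <= p -> 0 <= q -> f ^+ 2 <= 2 * (a ^+ 2 + b ^+ 2) * (p ^+ 2 + q ^+ 2).
Proof.
move=> h0 h ha hb hp hq.
have h1 : f ^+ 2 <= (a * q + b * p) ^+ 2 by nra.
apply: le_trans h1 _.
have : 0 <= (a * q - b * p) ^+ 2 by exact: sqr_ge0.
have : 0 <= a ^+ 2 * p ^+ 2 by rewrite mulr_ge0 ?sqr_ge0.
have : 0 <= b ^+ 2 * q ^+ 2 by rewrite mulr_ge0 ?sqr_ge0.
nra.
Qed.

Lemma cross_bound (e v : C * C) : normc (cross e v) ^+ 2 <=
  2 * (normc e.1 ^+ 2 + normc e.2 ^+ 2) * (normc v.1 ^+ 2 + normc v.2 ^+ 2).
Proof.
rewrite /cross.
have h := normcB (e.1 * v.2) (e.2 * v.1); rewrite !normcM in h.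
by apply: (aux_sq (nc_ge0 _) h); exact: nc_ge0.
Qed.

Lemma sum_sub (g h : nat -> R) (M : R) : (forall i, 0 <= h i) -> (forall i, g i <= h i) ->
  (forall N, \sum_(i < N) h i <= M) -> forall N, \sum_(i < N) g i <= M.
Proof. by move=> h0 gh hM N; apply: le_trans (hM N); apply: ler_sum => i _. Qed.

Lemma sum_sub1 (g h : nat -> R) (M : R) : (forall i, 0 <= h i) -> (forall i, g i <= h i.+1) ->
  (forall N, \sum_(i < N) h i <= M) -> forall N, \sum_(i < N) g i <= M.
Proof.
move=> h0 gh hM N; apply: le_trans (hM N.+1).
rewrite big_ord_recl /= -[X in X <= _]add0r lerD //.
by apply: ler_sum => i _; rewrite /bump /= add1n.
Qed.

Lemma decay_gen (f : nat -> C) (V : nat -> C * C) (e : C * C) (M : R) :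
  (forall m, normc (f m) <= normc (f m.+1)) ->
  (forall m, f m = cross e (V m)) ->
  (forall N, \sum_(i < N) normc (V i).1 ^+ 2 <= M) ->
  (forall N, \sum_(i < N) normc (V i).2 ^+ 2 <= M) -> f 0%N = 0.
Proof.
move=> hmon hf h1 h2.
set K := 2 * (normc e.1 ^+ 2 + normc e.2 ^+ 2).
have hK : 0 <= K by rewrite mulr_ge0 // addr_ge0 // sqr_ge0.
suff : normc (f 0%N) = 0 by move/eq0_normc.
apply: (@growth0 _ (fun m => normc (f m)) (K * (M + M))) => //.
  by move=> m; exact: nc_ge0.
move=> N; apply: le_trans (_ : \sum_(i < N) K * (normc (V i).1 ^+ 2 + normc (V i).2 ^+ 2) <= _).
  by apply: ler_sum => i _; rewrite hf cross_bound.
by rewrite -mulr_sumr; apply: ler_wpM2l => //; rewrite big_split /=; exact: lerD (h1 N) (h2 N).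
Qed.

Section Decay.
Variables (x y t : int -> C).
Hypotheses (hch : chain x y t) (hl2 : cl2 x y t).

Lemma decay_p (ep : C * C) (mp : C) : Qp ep = scl mp ep -> normc mp <= 1 ->
  cross ep (W x t 1) = 0.
Proof.
move=> hep hmp; case: hl2 => M hM.
have hdet : forall u v, cross (Qp u) (Qp v) = al / be * cross u v.
  move=> u v; rewrite /Qp Qg_det ?rp_neq0 //; congr (_ * _); field.
  by rewrite rp_neq0 hbe.
apply: (@decay_gen (fun m => cross ep (W x t (Posz m.+1))) (fun m => W x t (Posz m.+1)) ep M) => //.
- move=> m.
  have h := hdet ep (W x t (Posz m.+1)).
  rewrite hep cross_scl_l -(Qn_pos m) -(chain_step hch) int_f in h.
  have := congr1 (@normc R) h; rewrite normcM [X in _ = X]normcM hdel mul1r => <-.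
  have := nc_ge0 (cross ep (W x t (Posz m.+2))); have := nc_ge0 mp; nra.
- apply: (sum_sub1 (g := fun i => normc (W x t (Posz i.+1)).1 ^+ 2) (h := fun i => ns x y t (Posz i) + ns x y t (Negz i)) (M := M))=> //.
    by move=> i; rewrite addr_ge0 ?ns_ge0.
  move=> i; rewrite /W /= /ns.
  have := nc_ge0 (y (Posz i.+1)); have := nc_ge0 (t (Posz i.+1)); have := ns_ge0 x y t (Negz i.+1).
  rewrite /ns; nra.
- apply: (sum_sub (g := fun i => normc (W x t (Posz i.+1)).2 ^+ 2) (h := fun i => ns x y t (Posz i) + ns x y t (Negz i)) (M := M))=> //.
    by move=> i; rewrite addr_ge0 ?ns_ge0.
  move=> i; rewrite /W /= int_b /ns.
  have := nc_ge0 (y (Posz i)); have := nc_ge0 (x (Posz i)); have := ns_ge0 x y t (Negz i).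
  rewrite /ns; nra.
Qed.

Lemma decay_m (em : C * C) (mm : C) : Qm em = scl mm em -> 1 <= normc mm ->
  cross em (W x t (Negz 0)) = 0.
Proof.
move=> hem hmm; case: hl2 => M hM.
have hdet : forall u v, cross (Qm u) (Qm v) = al / be * cross u v.
  move=> u v; rewrite /Qm Qg_det ?rm_neq0 //; congr (_ * _); field.
  by rewrite rm_neq0 hbe.
apply: (@decay_gen (fun m => cross em (W x t (Negz m))) (fun m => W x t (Negz m)) em M) => //.
- move=> m.
  have h := hdet em (W x t (Negz m.+1)).
  rewrite hem cross_scl_l -(Qn_neg m) -(chain_step hch) int_a in h.
  have := congr1 (@normc R) h; rewrite normcM [X in _ = X]normcM hdel mul1r => <-.
  have := nc_ge0 (cross em (W x t (Negz m))); nra.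
- apply: (sum_sub (g := fun i => normc (W x t (Negz i)).1 ^+ 2) (h := fun i => ns x y t (Posz i) + ns x y t (Negz i)) (M := M))=> //.
    by move=> i; rewrite addr_ge0 ?ns_ge0.
  move=> i; rewrite /W /= /ns.
  have := nc_ge0 (y (Negz i)); have := nc_ge0 (t (Negz i)); have := ns_ge0 x y t (Posz i).
  rewrite /ns; nra.
- apply: (sum_sub1 (g := fun i => normc (W x t (Negz i)).2 ^+ 2) (h := fun i => ns x y t (Posz i) + ns x y t (Negz i)) (M := M))=> //.
    by move=> i; rewrite addr_ge0 ?ns_ge0.
  move=> i; rewrite /W /= int_d /ns.
  have := nc_ge0 (y (Negz i.+1)); have := nc_ge0 (x (Negz i.+1)); have := ns_ge0 x y t (Posz i.+1).
  rewrite /ns; nra.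
Qed.
End Decay.


Lemma Qp_det u v : cross (Qp u) (Qp v) = al / be * cross u v.
Proof.
rewrite /Qp Qg_det ?rp_neq0 //; congr (_ * _); field.
by rewrite rp_neq0 hbe.
Qed.
Lemma Qm_det u v : cross (Qm u) (Qm v) = al / be * cross u v.
Proof.
rewrite /Qm Qg_det ?rm_neq0 //; congr (_ * _); field.
by rewrite rm_neq0 hbe.
Qed.

Definition Dvec (e : C * C) : C * C :=
  (e.1, rC c ^+ 2 / (rC (bp + dp) * rC (bm + dm)) * e.2).

Lemma cond_eq (ep em : C * C) (mp mm : C) : Qp ep = scl mp ep -> Qm em = scl mm em ->
  mp * cross ep (Qn 0 (Qn (Negz 0) em)) =
  mm * rC (bm + dm) / rC c * (al / be) * cross ep (Dvec em).
Proof.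
move=> hep hem.
have hc0 : rC c != 0 by rewrite rC_neq0 // gt_eqF.
have hbp0 : rC bp != 0 by rewrite rC_neq0 // gt_eqF.
have hbm0 : rC bm != 0 by rewrite rC_neq0 // gt_eqF.
have hEp : rC (bp + dp) != 0 by rewrite rC_neq0 // gt_eqF.
have hEm : rC (bm + dm) != 0 by rewrite rC_neq0 // gt_eqF.
rewrite Qn_0 Qn_m1 Qg_e ?rm_neq0 ?mulf_neq0 ?invr_eq0 //.
rewrite -/Qm hem Qg_a ?rp_neq0 // -/Qp.
have -> : ((rm / (rC c / rC bm) * (scl mm em).1, rC c / rC bp / rp * (scl mm em).2))
   = scl (mm * rC (bm + dm) / rC c) (Dvec em).
  rewrite /scl /Dvec /rm /rp /=; congr (_, _); field.
    by rewrite hc0 hbm0.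
  by rewrite hc0 hbp0 hEp hEm.
have hX : mp * cross ep (Qp (Dvec em)) = al / be * cross ep (Dvec em) by rewrite -cross_scl_l -hep Qp_det.
rewrite /Qp Qg_scl -/Qp cross_scl_r mulrCA hX; ring.
Qed.

Section Ref.
Variables (ep em : C * C) (mp mm : C).
Hypotheses (hep : Qp ep = scl mp ep) (hem : Qm em = scl mm em).
Hypotheses (hep0 : ep != (0, 0)) (hem0 : em != (0, 0)).
Hypotheses (hmp : normc mp < 1) (hmm : 1 < normc mm).
Hypothesis hcond : cross ep (Qn 0 (Qn (Negz 0) em)) = 0.

Definition W1r := Qn 0 (Qn (Negz 0) em).
Definition Wr (n : int) : C * C :=
  match n with
  | Posz 0 => Qn (Negz 0) em
  | Posz m.+1 => scl (mp ^+ m) W1r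
  | Negz m => scl (mm^-1 ^+ m) em
  end.

Lemma mm_neq0 : mm != 0.
Proof. by apply: contraTneq hmm => ->; rewrite normc0 ltr10. Qed.

Lemma W1r_eig : Qp W1r = scl mp W1r.
Proof.
have [g hg] := cross0_scl hep0 hcond.
by rewrite /W1r hg /Qp Qg_scl -/Qp hep !scl_scl mulrC.
Qed.

Lemma Wr_step n : Wr (n + 1) = Qn n (Wr n).
Proof.
case: n => [[|m]|[|m]].
- by rewrite int_f /= expr0 scl1.
- by rewrite int_f /= Qn_pos /Qp Qg_scl -/Qp W1r_eig scl_scl exprSr.
- by rewrite int_g /= expr0 scl1.
- rewrite int_a /= Qn_neg /Qm Qg_scl -/Qm hem scl_scl exprSr -mulrA mulVf ?mulr1 //.
  exact: mm_neq0.
Qed.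

Definition xr := xW Wr.
Definition yr := yW Wr.
Definition tr := tW Wr.

Lemma chain_r : chain xr yr tr.
Proof. exact: chain_of_W Wr_step. Qed.

Lemma Wr_m1 : W xr tr (Negz 0) = em.
Proof. by rewrite W_of_W ?Wr_step //= expr0 scl1. Qed.


Lemma scale_ns x y t (s : C) n0 n1 : x n1 = s * x n0 -> y n1 = s * y n0 -> t n1 = s * t n0 ->
  ns x y t n1 = normc s ^+ 2 * ns x y t n0.
Proof. by move=> h1 h2 h3; rewrite /ns h1 h2 h3 !normcM !exprMn; ring. Qed.

Lemma cl2_r : cl2 xr yr tr.
Proof.
set r1 := normc mp ^+ 2; set r2 := normc (mm^-1) ^+ 2.
have hr1 : 0 <= r1 < 1.
  rewrite /r1 sqr_ge0 /=; have := nc_ge0 mp; move: hmp; nra.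
have hr2 : 0 <= r2 < 1.
  rewrite /r2 sqr_ge0 /= normcV.
  have h0 : 0 < normc mm by apply: lt_trans hmm.
  have : (normc mm)^-1 < 1 by rewrite invf_lt1.
  have : 0 < (normc mm)^-1 by rewrite invr_gt0.
  nra.
exists ((ns xr yr tr 0 + ns xr yr tr 1 * (1 - r1)^-1) +
        (ns xr yr tr (Negz 0) + ns xr yr tr (Negz 1) * (1 - r2)^-1)).
move=> N; rewrite big_split /=; apply: lerD.
- apply: (geo_l2 (f := fun i => ns xr yr tr (Posz i))) => //.
    by move=> m; exact: ns_ge0.
  move=> m; rewrite /r1 -exprM mulnC exprM -normcX.
  apply: scale_ns.
  + by rewrite /xr /xW /= expr0 mul1r.
  + rewrite /yr /yW /xW /Cc /Bc int_b /cseq /Defs.bseq /= expr0 !mul1r; ring.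
  + by rewrite /tr /tW !int_f /= !exprS; ring.
- apply: (geo_l2 (f := fun i => ns xr yr tr (Negz i))) => //.
    by move=> m; exact: ns_ge0.
  move=> m; rewrite /r2 -exprM mulnC exprM -normcX.
  apply: scale_ns.
  + by rewrite /xr /xW /= expr1 mulrA -exprSr.
  + rewrite /yr /yW /xW /Cc /Bc !int_d /cseq /Defs.bseq /= expr1 exprS; ring.
  + by rewrite /tr /tW !int_a /= expr0 mul1r.
Qed.

End Ref.

Section Main.
Variables (ep em : C * C) (mp mm : C).
Hypotheses (hep : Qp ep = scl mp ep) (hem : Qm em = scl mm em).
Hypotheses (hep0 : ep != (0, 0)) (hem0 : em != (0, 0)).
Hypotheses (hmp : normc mp < 1) (hmm : 1 < normc mm) (hmp0 : mp != 0).

Lemma W_m1_scl x y t : chain x y t -> cl2 x y t -> exists s, W x t (Negz 0) = scl s em.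
Proof.
move=> hch hl; apply: cross0_scl => //.
by apply: (decay_m hch hl hem); apply: ltW.
Qed.

Lemma G1 : cross ep (Dvec em) != 0 -> forall x y t, chain x y t -> cl2 x y t ->
  forall n, [/\ x n = 0, y n = 0 & t n = 0].
Proof.
move=> hD x y t hch hl.
have [s hs] := W_m1_scl hch hl.
apply: (chain_zero hch).
have h1 := decay_p hch hl hep (ltW hmp).
rewrite (chain_interface hch) hs /Qn !Qg_scl -/(Qn _) cross_scl_r in h1.
have hne : cross ep (Qn 0 (Qn (Negz 0) em)) != 0.
  apply/negP => /eqP h0.
  have := cond_eq hep hem; rewrite h0 mulr0 => /esym/eqP.
  have hc0 : rC c != 0 by rewrite rC_neq0 // gt_eqF.
  have hEm : rC (bm + dm) != 0 by rewrite rC_neq0 // gt_eqF.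
  rewrite !mulf_eq0 !invr_eq0 (negbTE hD) (negbTE hc0) (negbTE hEm).
  by rewrite (negbTE (mm_neq0 hmm)) (negbTE hal) (negbTE hbe).
move: h1 => /eqP; rewrite mulf_eq0 (negbTE hne) orbF => /eqP s0.
by rewrite hs s0 /scl /= !mul0r.
Qed.

Lemma G2 : cross ep (Dvec em) = 0 -> exists x0 y0 t0,
  [/\ chain x0 y0 t0, cl2 x0 y0 t0, (x0 (Negz 0) != 0) || (t0 (Negz 1) != 0) &
      forall x y t, chain x y t -> cl2 x y t -> exists s, forall n,
        [/\ x n = s * x0 n, y n = s * y0 n & t n = s * t0 n]].
Proof.
move=> hD.
have hcond : cross ep (Qn 0 (Qn (Negz 0) em)) = 0.
  have := cond_eq hep hem; rewrite hD mulr0 => /eqP; rewrite mulf_eq0 (negbTE hmp0) /=.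
  by move/eqP.
exists (xr em mp mm), (yr em mp mm), (tr em mp mm); split.
- exact: (chain_r hep hem hep0 hmm hcond).
- exact: (cl2_r em hmp hmm).
- have h := Wr_m1 em mp mm.
  rewrite -negb_and; apply/negP => /andP[/eqP a /eqP b].
  by move: hem0; rewrite -h /W int_d a b eqxx.
- move=> x y t hch hl.
  have [s hs] := W_m1_scl hch hl.
  exists s; apply: (chain_unique hch).
    exact: (chain_r hep hem hep0 hmm hcond).
  by rewrite Wr_m1.
Qed.
End Main.

End Chain.


Section P4.
Variable R : realType.
Local Notation C := R[i].

Lemma rCE (x : R) : rC x = x%:C. Proof. by []. Qed.

Lemma expi_mul (k : R) : expi k * expi (- k) = 1.
Proof.
rewrite /expi cosN sinN; apply/eqP; rewrite eq_complex /=; apply/andP; split.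
  by rewrite mulrN opprK -!expr2 cos2Dsin2.
by apply/eqP; ring.
Qed.

Lemma expi_neq0 (k : R) : expi k != 0.
Proof. by apply/negP => /eqP h; have := expi_mul k; rewrite h mul0r => /eqP; rewrite eq_sym oner_eq0. Qed.

Lemma expiN (k : R) : expi (- k) = (expi k)^-1.
Proof. by apply: (mulfI (expi_neq0 k)); rewrite expi_mul mulfV // expi_neq0. Qed.

Lemma normc_expi (k : R) : normc (expi k) = 1.
Proof. by rewrite /normc /expi cos2Dsin2 sqrtr1. Qed.

Lemma conj_expi (k : R) : (expi k)^* = expi (- k).
Proof. by rewrite /expi /= cosN sinN. Qed.

Definition vec2 (v : 'cV[C]_2) : C * C := (v ord0 ord0, v (lift ord0 ord0) ord0).

Lemma vec2_mul (a b c d : C) v :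
  vec2 (mx2 a b c d *m v) = (a * (vec2 v).1 + b * (vec2 v).2, c * (vec2 v).1 + d * (vec2 v).2).
Proof. by rewrite /vec2 !mxE !big_ord_recl !big_ord0 !mxE /= !addr0. Qed.

Lemma vec2_scale (s : C) v : vec2 (s *: v) = scl s (vec2 v).
Proof. by rewrite /vec2 /scl !mxE. Qed.

Lemma vec2_neq0 (v : 'cV[C]_2) : v != 0 -> vec2 v != (0, 0).
Proof.
apply: contra => /eqP [h1 h2]; apply/eqP/matrixP => i j; rewrite !mxE.
rewrite (ord1 j); case: i => [[|[|i]] hi] //.
- by rewrite -h1; congr (v _ _); apply: val_inj.
- by rewrite -h2; congr (v _ _); apply: val_inj.
Qed.

Lemma vec2_inj (v u : 'cV[C]_2) : vec2 v = vec2 u -> v = u.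
Proof.
move=> [h1 h2]; apply/matrixP => i j; rewrite (ord1 j).
case: i => [[|[|i]] hi] //.
- by have -> : Ordinal hi = ord0 by apply: val_inj.
- by have -> : Ordinal hi = lift ord0 ord0 by apply: val_inj.
Qed.

Lemma QBm_Qg (rho z : C) v : rho != 0 -> z != 0 ->
  vec2 (QBm rho z *m v) = Qg z^-1 z 1 rho rho rho (vec2 v).
Proof.
move=> hr hz; rewrite /QBm vec2_mul /Qg /=; congr (_, _); field.
  by rewrite hr hz.
exact: hz.

Qed.

Lemma Pmat_Qg (b eps k : R) v : 0 < b -> 0 < b + eps ->
  vec2 (Pmat b eps k *m v) =
  Qg (expi (- k)) (expi k) 1 (rC (b + eps) / rC b) (rC (b + eps) / rC b) (rC (b + eps) / rC b)
  (Qg (expi (- k)) (expi k) 1 (rC (b + eps) / rC b) (rC (b + eps) / rC b) (rC (b + eps) / rC b) (vec2 v)).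
Proof.
move=> hb he.
have hB : rC b != 0 by rewrite rC_neq0 // gt_eqF.
have hE : rC (b + eps) != 0 by rewrite rC_neq0 // gt_eqF.
have hr : rC (b + eps) / rC b != 0 by rewrite mulf_neq0 // invr_eq0.
rewrite /Pmat expiN Pmat_gen ?expi_neq0 // -mulmxA !QBm_Qg ?expi_neq0 //.
Qed.


Lemma scl_cancel (a b : C) v : v != (0, 0) -> scl a v = scl b v -> a = b.
Proof.
case: v => v1 v2 hv [h1 h2].
have [e1|e1] := eqVneq v1 0.
  have e2 : v2 != 0 by apply: contra hv => /eqP ->; rewrite e1.
  by apply: (mulIf e2).
by apply: (mulIf e1).
Qed.

Lemma sq1 (a : R) : 0 <= a -> a * a = 1 -> a = 1.
Proof. by move=> h0 h; apply/eqP; rewrite eq_le; apply/andP; split; nra. Qed.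

Section Eig.
Variable Q : C * C -> C * C.
Variable del : C.
Hypotheses (hlin : forall s v, Q (scl s v) = scl s (Q v))
  (hdet : forall u v, cross (Q u) (Q v) = del * cross u v)
  (hdel : normc del = 1)
  (hinj : forall v, Q v = (0, 0) -> v = (0, 0)).

Lemma eig_sqrt v l : v != (0, 0) -> Q (Q v) = scl l v -> normc l != 1 ->
  exists mu, [/\ Q v = scl mu v, mu ^+ 2 = l & mu != 0].
Proof.
move=> hv hQ hl.
have h2 : Q (Q (Q v)) = scl l (Q v) by rewrite hQ hlin.
have h1 : cross (Q (Q v)) (Q (Q (Q v))) = del * (del * cross v (Q v)) by rewrite !hdet.
rewrite h2 hQ cross_scl_l cross_scl_r in h1.
have hne : l * l - del * del != 0.
  apply/negP; rewrite subr_eq0 => /eqP he.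
  have := congr1 (@normc R) he; rewrite !normcM hdel mulr1 => h.
  by rewrite (sq1 (nc_ge0 l) h) eqxx in hl.
have hc : cross v (Q v) = 0.
  have : (l * l - del * del) * cross v (Q v) = 0 by rewrite mulrBl -!mulrA h1 subrr.
  by move/eqP; rewrite mulf_eq0 (negbTE hne) /= => /eqP.
have [mu hmu] := cross0_scl hv hc.
exists mu; split => //.
- apply: (@scl_cancel _ _ v hv).
  by rewrite expr2 -scl_scl -hmu -hlin -hmu hQ.
- apply/negP => /eqP m0.
  have hv0 : v = (0, 0) by apply: hinj; rewrite hmu m0 /scl !mul0r.
  by rewrite hv0 eqxx in hv.
Qed.
End Eig.

Lemma conjE (x : C) : Num.conj x = x^*. Proof. by []. Qed.

Definition Tm (z : C) (v : C * C) : C * C := (v.1^*, z * v.2^*).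

Lemma QA_T (rho z : C) v : rho^* = rho -> z^* = z^-1 -> rho != 0 -> z != 0 ->
  Qg 1 z^-1 z rho rho rho (Tm z v) = scl z^-1 (Tm z (Qg z^-1 z 1 rho rho rho v)).
Proof.
move=> hr hz hr0 hz0; rewrite /Qg /Tm /scl /=.
rewrite !(rmorphD, rmorphN, rmorphM, fmorphV, rmorph1) /= !conjE hr hz invrK.
congr (_, _); field; by rewrite ?hr0 ?hz0.
Qed.

Lemma Tm_scl (z s : C) v : Tm z (scl s v) = scl s^* (Tm z v).
Proof. by rewrite /Tm /scl /= !rmorphM; congr (_, _); ring. Qed.

Lemma Tm_neq0 (z : C) v : z != 0 -> v != (0, 0) -> Tm z v != (0, 0).
Proof.
case: v => a b hz; apply: contra => /eqP [h1 h2].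
move/eqP: h2; rewrite mulf_eq0 (negbTE hz) /= conjc_eq0 => /eqP ->.
by move/eqP: h1; rewrite conjc_eq0 => /eqP ->.
Qed.

Lemma cross_Tm (z ka : C) a b : ka^* = ka ->
  cross (Tm z a) ((Tm z b).1, ka * (Tm z b).2) = z * (cross a (b.1, ka * b.2))^*.
Proof.
move=> hk; rewrite /cross /Tm /=.
rewrite !(rmorphB, rmorphM) /= !conjE hk; ring.
Qed.

Lemma normc_conj (x : C) : normc x^* = normc x.
Proof. by case: x => a b; rewrite /normc /= sqrrN. Qed.

End P4.


Section P5.
Variable R : realType.
Local Notation C := R[i].

Definition emb (xA yA tA xB yB tB : int -> C) : seq6 R := fun n j =>
  match nat_of_ord j with
  | 0 => xA n | 1 => yA n | 2 => tA n | 3 => xB n | 4 => yB n | _ => tB n end.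

Lemma val_inord6 m : (m < 6)%N -> nat_of_ord (@inord 5 m) = m.
Proof. by move=> h; rewrite inordK. Qed.

Lemma cmp_emb1 xA yA tA xB yB tB n : cmp (emb xA yA tA xB yB tB) 1 n = xA n.
Proof. by rewrite /cmp /emb /= val_inord6. Qed.
Lemma cmp_emb2 xA yA tA xB yB tB n : cmp (emb xA yA tA xB yB tB) 2 n = yA n.
Proof. by rewrite /cmp /emb /= val_inord6. Qed.
Lemma cmp_emb3 xA yA tA xB yB tB n : cmp (emb xA yA tA xB yB tB) 3 n = tA n.
Proof. by rewrite /cmp /emb /= val_inord6. Qed.
Lemma cmp_emb4 xA yA tA xB yB tB n : cmp (emb xA yA tA xB yB tB) 4 n = xB n.
Proof. by rewrite /cmp /emb /= val_inord6. Qed.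
Lemma cmp_emb5 xA yA tA xB yB tB n : cmp (emb xA yA tA xB yB tB) 5 n = yB n.
Proof. by rewrite /cmp /emb /= val_inord6. Qed.
Lemma cmp_emb6 xA yA tA xB yB tB n : cmp (emb xA yA tA xB yB tB) 6 n = tB n.
Proof. by rewrite /cmp /emb /= val_inord6. Qed.

Lemma emb_cmp (u : seq6 R) n j :
  u n j = emb (cmp u 1) (cmp u 2) (cmp u 3) (cmp u 4) (cmp u 5) (cmp u 6) n j.
Proof.
rewrite /emb /cmp; case: j => [[|[|[|[|[|[|j]]]]]] hj] //=;
  by congr (u n _); apply: val_inj; rewrite /= inordK.
Qed.

Variables (bp bm dp dm c k : R).

Lemma HI_iff (u : seq6 R) : (forall n j, HI bp bm dp dm c k u n j = 0) <->
  chain bp bm dp dm c (expi (- k)) (expi k) 1 (cmp u 4) (cmp u 5) (cmp u 6) /\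
  chain bp bm dp dm c 1 (expi (- k)) (expi k) (cmp u 1) (cmp u 2) (cmp u 3).
Proof.
split.
- move=> H; split => n; split.
  + by apply/eqP; rewrite -oppr_eq0; apply/eqP; rewrite -(H n (@Ordinal 6 0 isT)) /HI /Bc /Cc /=; ring.
  + by apply/eqP; rewrite -oppr_eq0; apply/eqP; rewrite -(H n (@Ordinal 6 1 isT)) /HI /Bc /Dc /=; ring.
  + by apply/eqP; rewrite -oppr_eq0; apply/eqP; rewrite -(H n (@Ordinal 6 2 isT)) /HI /Bc /Cc /=; ring.
  + by apply/eqP; rewrite -oppr_eq0; apply/eqP; rewrite -(H n (@Ordinal 6 3 isT)) /HI /Bc /Cc /=; ring.
  + by apply/eqP; rewrite -oppr_eq0; apply/eqP; rewrite -(H n (@Ordinal 6 4 isT)) /HI /Bc /Dc /=; ring.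
  + by apply/eqP; rewrite -oppr_eq0; apply/eqP; rewrite -(H n (@Ordinal 6 5 isT)) /HI /Bc /Cc /=; ring.
- case=> hB hA n j; case: (hB n) => b1 b2 b3; case: (hA n) => a1 a2 a3.
  case: j => [[|[|[|[|[|[|j]]]]]] hj] //=.
  + by rewrite /HI /=; apply/eqP; rewrite -oppr_eq0 -b1 /Bc /Cc; apply/eqP; ring.
  + by rewrite /HI /=; apply/eqP; rewrite -oppr_eq0 -b2 /Bc /Dc; apply/eqP; ring.
  + by rewrite /HI /=; apply/eqP; rewrite -oppr_eq0 -b3 /Bc /Cc; apply/eqP; ring.
  + by rewrite /HI /=; apply/eqP; rewrite -oppr_eq0 -a1 /Bc /Cc; apply/eqP; ring.
  + by rewrite /HI /=; apply/eqP; rewrite -oppr_eq0 -a2 /Bc /Dc; apply/eqP; ring.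
  + by rewrite /HI /=; apply/eqP; rewrite -oppr_eq0 -a3 /Bc /Cc; apply/eqP; ring.
Qed.

Definition TA (u : seq6 R) n := ns (cmp u 1) (cmp u 2) (cmp u 3) n.
Definition TB (u : seq6 R) n := ns (cmp u 4) (cmp u 5) (cmp u 6) n.

Lemma nsq (x : C) : `|x| ^+ 2 = (normc x ^+ 2)%:C.
Proof. by rewrite rmorphXn. Qed.

Lemma sum6 (u : seq6 R) (i : nat) :
  \sum_(j < 6) (`|u (i%:Z) j| ^+ 2 + `|u (- (i%:Z) - 1) j| ^+ 2) =
  ((TA u (Posz i) + TA u (Negz i)) + (TB u (Posz i) + TB u (Negz i)))%:C.
Proof.
rewrite int_e !big_ord_recl big_ord0 !nsq /TA /TB /ns /cmp.
have e0 : (@inord 5 0) = ord0 by apply: val_inj; rewrite /= inordK.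
have e1 : (@inord 5 1) = lift ord0 ord0 by apply: val_inj; rewrite /= inordK.
have e2 : (@inord 5 2) = lift ord0 (lift ord0 ord0) by apply: val_inj; rewrite /= inordK.
have e3 : (@inord 5 3) = lift ord0 (lift ord0 (lift ord0 ord0)) by apply: val_inj; rewrite /= inordK.
have e4 : (@inord 5 4) = lift ord0 (lift ord0 (lift ord0 (lift ord0 ord0))).
  by apply: val_inj; rewrite /= inordK.
have e5 : (@inord 5 5) = lift ord0 (lift ord0 (lift ord0 (lift ord0 (lift ord0 ord0)))).
  by apply: val_inj; rewrite /= inordK.
rewrite /= e0 e1 e2 e3 e4 e5.
rewrite -!rmorphD /=; congr (_%:C); ring.
Qed.

Lemma l2_iff (u : seq6 R) : l2 u <-> exists M : R, forall N,
  \sum_(i < N) ((TA u (Posz i) + TA u (Negz i)) + (TB u (Posz i) + TB u (Negz i))) <= M.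
Proof.
rewrite /l2; split => -[M hM]; exists M => N; have := hM N.
  by under eq_bigr do rewrite sum6; rewrite -rmorph_sum /= -lecR.
by move=> h; under eq_bigr do rewrite sum6; rewrite -rmorph_sum /= rCE lecR.
Qed.

Lemma chain_ext (al ze be : C) (x y t x' y' t' : int -> C) :
  (forall n, x n = x' n) -> (forall n, y n = y' n) -> (forall n, t n = t' n) ->
  chain bp bm dp dm c al ze be x y t -> chain bp bm dp dm c al ze be x' y' t'.
Proof. by move=> hx hy ht h n; case: (h n); rewrite !hx !hy !ht. Qed.

Lemma chain0 (al ze be : C) : chain bp bm dp dm c al ze be (fun _ => 0) (fun _ => 0) (fun _ => 0).
Proof. by move=> n; split; rewrite !mulr0 !addr0. Qed.

Lemma cond_iff (v1 v2 : 'cV[C]_2) : 0 < bp + dp -> 0 < bm + dm -> 0 < c -> v1 != 0 -> v2 != 0 ->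
  (exists g : C, g != 0 /\ mx2 1 0 0 (rC ((bp + dp) * (bm + dm) / c ^+ 2)) *m v1 = g *: v2) <->
  cross (vec2 v1) (Dvec bp bm dp dm c (vec2 v2)) = 0.
Proof.
move=> hp hm hc hv1 hv2.
have hc0 : rC c != 0 by rewrite rC_neq0 // gt_eqF.
have hEp : rC (bp + dp) != 0 by rewrite rC_neq0 // gt_eqF.
have hEm : rC (bm + dm) != 0 by rewrite rC_neq0 // gt_eqF.
have hS : rC ((bp + dp) * (bm + dm) / c ^+ 2) = rC (bp + dp) * rC (bm + dm) / rC c ^+ 2.
  by rewrite !rCE rmorphM fmorphV rmorphM rmorphXn.
rewrite hS.
have he1 := vec2_neq0 hv1; have he2 := vec2_neq0 hv2.
have hsc := fun g => vec2_scale g v2.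
have hmul := vec2_mul 1 0 0 (rC (bp + dp) * rC (bm + dm) / rC c ^+ 2) v1.
move: (vec2 v1) (vec2 v2) he1 he2 hmul hsc => [a b] [e f] /= he1 he2 hmul hsc.
rewrite /Dvec /cross /=.
split.
- move=> [g [hg hM]].
  have := congr1 (@vec2 R) hM; rewrite hmul hsc /scl /= => -[h1 h2].
  rewrite !mul1r !mul0r addr0 add0r in h1 h2.
  rewrite h1.
  have -> : b = g * f / (rC (bp + dp) * rC (bm + dm) / rC c ^+ 2).
    by rewrite -h2; field; rewrite hc0 hEp hEm.
  field; by rewrite hc0 hEp hEm.
- move=> hx.
  have hcr : cross (e, f) (a, rC (bp + dp) * rC (bm + dm) / rC c ^+ 2 * b) = 0.
    rewrite /cross /=.
    have -> : e * (rC (bp + dp) * rC (bm + dm) / rC c ^+ 2 * b) - f * a =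
      - (rC (bp + dp) * rC (bm + dm) / rC c ^+ 2) * (a * (rC c ^+ 2 / (rC (bp + dp) * rC (bm + dm)) * f) - b * e).
      by field; rewrite hc0 hEp hEm.
    by rewrite hx mulr0.
  have [g hg] := cross0_scl he2 hcr.
  exists g; split.
    apply/negP => /eqP g0; move: hg; rewrite g0 /scl !mul0r => -[ha hb].
    move: hb => /eqP; rewrite mulf_eq0 !mulf_eq0 invr_eq0 expf_eq0 /= (negbTE hc0) (negbTE hEp) (negbTE hEm) /=.
    by move/eqP => hb; move: he1; rewrite ha hb eqxx.
  by apply: vec2_inj; rewrite hmul hsc -hg !mul1r !mul0r addr0 add0r.
Qed.

End P5.


Unset Implicit Arguments.

Theorem theorem6 (R : realType) (bp bm dp dm c k : R)
  (hbp : 0 < bp) (hbm : 0 < bm) (hdp : 0 < bp + dp) (hdm : 0 < bm + dm) (hc : 0 < c)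
  (hk : - pi <= k < pi) (hnd : k != 0 \/ (dp != 0 /\ dm != 0))
  (v1 v2 : 'cV[R[i]]_2) (l1 l2 : R[i])
  (hv1 : v1 != 0) (hP1 : Pmat bp dp k *m v1 = l1 *: v1) (hl1 : `|l1| < 1)
  (hv2 : v2 != 0) (hP2 : Pmat bm dm k *m v2 = l2 *: v2) (hl2 : 1 < `|l2|) :
  dim2 (kernel_l2 (HI bp bm dp dm c k)) <->
  exists g : R[i], g != 0 /\
    mx2 1 0 0 (rC ((bp + dp) * (bm + dm) / c ^+ 2)) *m v1 = g *: v2.
Proof.
have hz0 := expi_neq0 k.
have hw := expiN k.
have hw0 : expi (- k) != 0 by rewrite expi_neq0.
have h10 : (1 : R[i]) != 0 := oner_neq0 _.
have hdelB : normc (expi (- k) / 1) = 1 by rewrite divr1 normc_expi.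
have hdelA : normc (1 / expi k) = 1 by rewrite mul1r normcV normc_expi invr1.
set e1 := vec2 v1; set e2 := vec2 v2.
have he1 : e1 != (0, 0) := vec2_neq0 hv1.
have he2 : e2 != (0, 0) := vec2_neq0 hv2.
have hl1' : normc l1 < 1 by rewrite -ltcR.
have hl2' : 1 < normc l2 by rewrite -ltcR.
have hPe1 : Qp bp dp (expi (- k)) (expi k) 1 (Qp bp dp (expi (- k)) (expi k) 1 e1) = scl l1 e1.
  by rewrite /e1 -vec2_scale -hP1 Pmat_Qg.
have hPe2 : Qm bm dm (expi (- k)) (expi k) 1 (Qm bm dm (expi (- k)) (expi k) 1 e2) = scl l2 e2.
  by rewrite /e2 -vec2_scale -hP2 Pmat_Qg.
have [mu1 [hmu1 hmu1sq hmu10]] : exists mu, [/\ Qp bp dp (expi (- k)) (expi k) 1 e1 = scl mu e1,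
    mu ^+ 2 = l1 & mu != 0].
  apply: (eig_sqrt (del := expi (- k) / 1)) => //.
  - by move=> s v; rewrite /Qp Qg_scl.
  - by move=> u v; rewrite Qp_det.
  - move=> v; apply: Qg_inj0 => //; exact: rp_neq0.
  - by rewrite neq_lt hl1'.
have [mu2 [hmu2 hmu2sq hmu20]] : exists mu, [/\ Qm bm dm (expi (- k)) (expi k) 1 e2 = scl mu e2,
    mu ^+ 2 = l2 & mu != 0].
  apply: (eig_sqrt (del := expi (- k) / 1)) => //.
  - by move=> s v; rewrite /Qm Qg_scl.
  - by move=> u v; rewrite Qm_det.
  - move=> v; apply: Qg_inj0 => //; exact: rm_neq0.
  - by rewrite neq_lt hl2' orbT.
have hm1 : normc mu1 < 1.
  move: hl1'; rewrite -hmu1sq normcX; have := nc_ge0 mu1; nra.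
have hm2 : 1 < normc mu2.
  move: hl2'; rewrite -hmu2sq normcX; have := nc_ge0 mu2; nra.
have hzc : (expi k)^* = (expi k)^-1 by rewrite conj_expi hw.
have hrp : (rp bp dp)^* = rp bp dp.
  by rewrite /rp rmorphM fmorphV /= !oppr0.
have hrm : (rm bm dm)^* = rm bm dm.
  by rewrite /rm rmorphM fmorphV /= !oppr0.
set f1 := Tm (expi k) e1; set f2 := Tm (expi k) e2.
have hf1 : Qp bp dp 1 (expi (- k)) (expi k) f1 = scl ((expi k)^-1 * mu1^*) f1.
  by rewrite /Qp hw QA_T ?rp_neq0 // -/(Qp _ _ _ _ _) -hw hmu1 Tm_scl scl_scl.
have hf2 : Qm bm dm 1 (expi (- k)) (expi k) f2 = scl ((expi k)^-1 * mu2^*) f2.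
  by rewrite /Qm hw QA_T ?rm_neq0 // -/(Qm _ _ _ _ _) -hw hmu2 Tm_scl scl_scl.
have hf10 : f1 != (0, 0) by apply: Tm_neq0.
have hf20 : f2 != (0, 0) by apply: Tm_neq0.
have hn1 : normc ((expi k)^-1 * mu1^*) = normc mu1 by rewrite normcM normcV normc_expi invr1 mul1r normc_conj.
have hn2 : normc ((expi k)^-1 * mu2^*) = normc mu2 by rewrite normcM normcV normc_expi invr1 mul1r normc_conj.
have hfm10 : (expi k)^-1 * mu1^* != 0 by rewrite mulf_neq0 ?invr_eq0 ?conjc_eq0.
have hka : (rC c ^+ 2 / (rC (bp + dp) * rC (bm + dm)))^* = rC c ^+ 2 / (rC (bp + dp) * rC (bm + dm)).
  have -> : rC c ^+ 2 / (rC (bp + dp) * rC (bm + dm)) = rC (c ^+ 2 / ((bp + dp) * (bm + dm))).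
    by rewrite !rCE !(rmorphM, fmorphV, rmorphXn).
  by rewrite /= oppr0.
have hcAB : cross f1 (Dvec bp bm dp dm c f2) = expi k * (cross e1 (Dvec bp bm dp dm c e2))^*.
  by rewrite /Dvec /f1 /f2 -cross_Tm.
have hcABiff : (cross f1 (Dvec bp bm dp dm c f2) == 0) = (cross e1 (Dvec bp bm dp dm c e2) == 0).
  by rewrite hcAB mulf_eq0 (negbTE hz0) /= conjc_eq0.
have hker : forall u, kernel_l2 (HI bp bm dp dm c k) u ->
    [/\ chain bp bm dp dm c (expi (- k)) (expi k) 1 (cmp u 4) (cmp u 5) (cmp u 6),
        chain bp bm dp dm c 1 (expi (- k)) (expi k) (cmp u 1) (cmp u 2) (cmp u 3),
        cl2 (cmp u 4) (cmp u 5) (cmp u 6) & cl2 (cmp u 1) (cmp u 2) (cmp u 3)].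
  move=> u [hl hH]; have [chB chA] := (HI_iff bp bm dp dm c k u).1 hH.
  have [M hM] := (l2_iff u).1 hl.
  split => //; exists M.
  - apply: (sum_sub (g := fun i => TB u (Posz i) + TB u (Negz i))
      (h := fun i => (TA u (Posz i) + TA u (Negz i)) + (TB u (Posz i) + TB u (Negz i))) (M := M)) => //.
      by move=> i; do 2 apply: addr_ge0; exact: ns_ge0.
    by move=> i /=; rewrite lerDr /TA addr_ge0 ?ns_ge0.
  - apply: (sum_sub (g := fun i => TA u (Posz i) + TA u (Negz i))
      (h := fun i => (TA u (Posz i) + TA u (Negz i)) + (TB u (Posz i) + TB u (Negz i))) (M := M)) => //.
      by move=> i; do 2 apply: addr_ge0; exact: ns_ge0.
    by move=> i /=; rewrite lerDl /TB addr_ge0 ?ns_ge0.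
have hcond := cond_iff hdp hdm hc hv1 hv2.
have hm1A : normc ((expi k)^-1 * mu1^*) < 1 by rewrite hn1.
have hm2A : 1 < normc ((expi k)^-1 * mu2^*) by rewrite hn2.
split.
- move=> [u1 [u2 [hk1 [hk2 [hind hspan]]]]].
  rewrite hcond; apply/eqP; apply/negPn/negP => hne.
  have hneA : cross f1 (Dvec bp bm dp dm c f2) != 0 by rewrite hcABiff.
  have hzero : forall u, kernel_l2 (HI bp bm dp dm c k) u -> forall n j, u n j = 0.
    move=> u hu n j; have [chB chA clB clA] := hker u hu.
    have [b1 b2 b3] := G1 hbp hbm hdp hdm hc hw0 h10 hdelB hmu1 hmu2 he2 hm1 hm2 hne chB clB n.
    have [a1 a2 a3] := G1 hbp hbm hdp hdm hc h10 hz0 hdelA hf1 hf2 hf20 hm1A hm2A hneA chA clA n.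
    rewrite emb_cmp /emb; case: j => [[|[|[|[|[|[|j]]]]]] hj] //=.
  have := hind 1 0; case => //; last by move=> /eqP; rewrite oner_eq0.
  by move=> n j; rewrite (hzero u1 hk1) (hzero u2 hk2) !mulr0 addr0.
- move=> hg.
  have hcB := hcond.1 hg.
  have hcA : cross f1 (Dvec bp bm dp dm c f2) = 0 by apply/eqP; rewrite hcABiff; apply/eqP.
  have [xB [yB [tB [chB clB nzB unB]]]] :=
    G2 hbp hbm hdp hdm hc hw0 h10 hdelB hmu1 hmu2 he1 he2 hm1 hm2 hmu10 hcB.
  have [xA [yA [tA [chA clA nzA unA]]]] :=
    G2 hbp hbm hdp hdm hc h10 hz0 hdelA hf1 hf2 hf10 hf20 hm1A hm2A hfm10 hcA.
  have hK : forall xA yA tA xB yB tB,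
      chain bp bm dp dm c (expi (- k)) (expi k) 1 xB yB tB ->
      chain bp bm dp dm c 1 (expi (- k)) (expi k) xA yA tA ->
      cl2 xB yB tB -> cl2 xA yA tA ->
      kernel_l2 (HI bp bm dp dm c k) (emb xA yA tA xB yB tB).
  { move=> xA' yA' tA' xB' yB' tB' cB cA [MB hMB] [MA hMA]; split.
    - apply/l2_iff; exists (MA + MB) => N.
      have eA : forall n, TA (emb xA' yA' tA' xB' yB' tB') n = ns xA' yA' tA' n.
        by move=> n; rewrite /TA /ns cmp_emb1 cmp_emb2 cmp_emb3.
      have eB : forall n, TB (emb xA' yA' tA' xB' yB' tB') n = ns xB' yB' tB' n.
        by move=> n; rewrite /TB /ns cmp_emb4 cmp_emb5 cmp_emb6.
      under eq_bigr do rewrite !eA !eB.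
      by rewrite big_split /=; exact: lerD (hMA N) (hMB N).
    - apply/HI_iff; split.
      + by apply: (chain_ext _ _ _ cB) => n; rewrite ?cmp_emb4 ?cmp_emb5 ?cmp_emb6.
      + by apply: (chain_ext _ _ _ cA) => n; rewrite ?cmp_emb1 ?cmp_emb2 ?cmp_emb3. }
  exists (emb xA yA tA (fun _ => 0) (fun _ => 0) (fun _ => 0)),
         (emb (fun _ => 0) (fun _ => 0) (fun _ => 0) xB yB tB).
  split; [|split; [|split]].
  + apply: (hK) => //; [exact: chain0 | exists 0 => N; rewrite big1 // => i _; rewrite /ns normc0 expr0n /= !addr0 //].
  + apply: (hK (fun _ => 0) (fun _ => 0) (fun _ => 0) xB yB tB) => //; [exact: chain0 | exists 0 => N; rewrite big1 // => i _; rewrite /ns normc0 expr0n /= !addr0 //].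
  + move=> a1 a2 h; split.
    * case/orP: nzA => hnz.
      - have := h (Negz 0) (@Ordinal 6 0 isT); rewrite /emb /= mulr0 addr0 => /eqP.
        by rewrite mulf_eq0 (negbTE hnz) orbF => /eqP.
      - have := h (Negz 1) (@Ordinal 6 2 isT); rewrite /emb /= mulr0 addr0 => /eqP.
        by rewrite mulf_eq0 (negbTE hnz) orbF => /eqP.
    * case/orP: nzB => hnz.
      - have := h (Negz 0) (@Ordinal 6 3 isT); rewrite /emb /= mulr0 add0r => /eqP.
        by rewrite mulf_eq0 (negbTE hnz) orbF => /eqP.
      - have := h (Negz 1) (@Ordinal 6 5 isT); rewrite /emb /= mulr0 add0r => /eqP.
        by rewrite mulf_eq0 (negbTE hnz) orbF => /eqP.
  + move=> u hu; have [chB' chA' clB' clA'] := hker u hu.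
    have [sB hsB] := unB _ _ _ chB' clB'.
    have [sA hsA] := unA _ _ _ chA' clA'.
    exists sA, sB => n j; have [p1 p2 p3] := hsA n; have [q1 q2 q3] := hsB n.
    rewrite emb_cmp /emb; case: j => [[|[|[|[|[|[|j]]]]]] hj] //=;
      by rewrite ?p1 ?p2 ?p3 ?q1 ?q2 ?q3 !mulr0 ?addr0 ?add0r.
Qed.
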